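(* Let $X$ be a real Hilbert space and let $\bar{x},\hat{x}\in X$ be two distinct points. Let $\hat{H}$ be the halfspace $\{\tilde{x}:\langle\bar{x}-\hat{x},\tilde{x}-\hat{x}\rangle\leq0\}$. Suppose that $x\in X$ is such that $\hat{x}$ lies in the halfspace $H:=\{\tilde{x}:\langle\bar{x}-x,\tilde{x}-x\rangle\leq0\}$. Then $\|x-\hat{x}\|\leq\|\bar{x}-\hat{x}\|$ and $d(x,\hat{H})\geq\frac{\|x-\hat{x}\|^{2}}{\|\bar{x}-\hat{x}\|}$.
   Context: $d(y,S)=\inf_{s\in S}\|y-s\|$ denotes the distance from a point $y$ to a set $S$. *)

(* Defs.v *)
From HB Require Import structures.
From mathcomp Require Import all_boot all_order all_algebra.
From mathcomp Require Import all_classical all_reals all_analysis.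
Set Implicit Arguments. Unset Strict Implicit. Unset Printing Implicit Defensive.
Import Order.TTheory GRing.Theory Num.Theory.
Local Open Scope classical_set_scope.
Local Open Scope ring_scope.

(* [ip] is an inner product on the normed space V inducing its norm.
   A real Hilbert space is then a complete normed space V (completeNormedModType R)
   equipped with such an [ip]. *)
Definition is_inner_product (R : realType) (V : normedModType R) (ip : V -> V -> R) : Prop :=
  [/\ (forall x y, ip x y = ip y x),
      (forall (a : R) x y z, ip (a *: x + y) z = a * ip x z + ip y z),
      (forall x, 0 <= ip x x),
      (forall x, ip x x = 0 -> x = 0)
    & (forall x, `|x| = Num.sqrt (ip x x))].

Definition dist_to_set (R : realType) (V : normedModType R) (y : V) (S : set V) : R :=
  inf [set `|y - s| | s in S].

(* Main.v *)
Require Import Defs.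
From HB Require Import structures.
From mathcomp Require Import all_boot all_order all_algebra.
From mathcomp Require Import all_classical all_reals all_analysis.
From mathcomp Require Import lra.
Import Order.TTheory GRing.Theory Num.Theory.
Local Open Scope classical_set_scope.
Local Open Scope ring_scope.

Set Implicit Arguments.
Section Aux.
Variables (R : realType) (X : normedModType R) (ip : X -> X -> R).
Hypothesis hip : is_inner_product ip.

Lemma ipD x y z : ip (x + y) z = ip x z + ip y z.
Proof. case: hip => _ h _ _ _. by rewrite -[x in LHS]scale1r h mul1r. Qed.

Lemma ip0l z : ip 0 z = 0.
Proof.
have := ipD 0 0 z; rewrite addr0 => /eqP; rewrite -subr_eq0.
by rewrite opprD addrA subrr sub0r oppr_eq0 => /eqP.
Qed.

Lemma ipZ a x z : ip (a *: x) z = a * ip x z.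
Proof. case: hip => _ h _ _ _. by have := h a x 0 z; rewrite addr0 ip0l addr0. Qed.

Lemma ipN x z : ip (- x) z = - ip x z.
Proof. by rewrite -scaleN1r ipZ mulN1r. Qed.

Lemma ipB x y z : ip (x - y) z = ip x z - ip y z.
Proof. by rewrite ipD ipN. Qed.

Lemma ipC x y : ip x y = ip y x.
Proof. by case: hip. Qed.

Lemma ipDr x y z : ip z (x + y) = ip z x + ip z y.
Proof. by rewrite ipC ipD !(ipC z). Qed.

Lemma ipZr a x z : ip z (a *: x) = a * ip z x.
Proof. by rewrite ipC ipZ ipC. Qed.

Lemma ipNr x z : ip z (- x) = - ip z x.
Proof. by rewrite ipC ipN ipC. Qed.

Lemma ipBr x y z : ip z (x - y) = ip z x - ip z y.
Proof. by rewrite ipDr ipNr. Qed.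

Lemma ipnorm x : `|x| ^+ 2 = ip x x.
Proof. case: hip => _ _ h _ n. by rewrite n sqr_sqrtr. Qed.

Lemma ip0r z : ip z 0 = 0.
Proof. by rewrite ipC ip0l. Qed.

Lemma cs a c : ip a c <= `|a| * `|c|.
Proof.
have [->|an] := eqVneq a 0; first by rewrite ip0l normr0 mul0r.
have [->|cn] := eqVneq c 0; first by rewrite ip0r normr0 mulr0.
have pa : 0 < `|a| by rewrite normr_gt0.
have pc : 0 < `|c| by rewrite normr_gt0.
have h0 : 0 <= ip (`|c| *: a - `|a| *: c) (`|c| *: a - `|a| *: c).
  by case: hip.
rewrite ipB !ipBr !ipZ !ipZr -!ipnorm (ipC c a) in h0.
have pp : 0 < `|a| * `|c| by rewrite mulr_gt0.
rewrite -(ler_pM2l pp).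
nra.
Qed.
End Aux.

Theorem proposition4p1 (R : realType) (X : completeNormedModType R)
  (ip : X -> X -> R) (hip : is_inner_product ip)
  (xbar xhat x : X) (hneq : xbar != xhat) :
  let Hhat := [set t : X | ip (xbar - xhat) (t - xhat) <= 0] in
  let H := [set t : X | ip (xbar - x) (t - x) <= 0] in
  H xhat ->
  `|x - xhat| <= `|xbar - xhat| /\
  dist_to_set x Hhat >= `|x - xhat| ^+ 2 / `|xbar - xhat|.
Proof.
move=> Hhat H hH.
set a := xbar - xhat; set b := x - xhat.
have pa : 0 < `|a| by rewrite normr_gt0 subr_eq0.
have e1 : xbar - x = a - b by rewrite /a /b opprB addrA subrK.
have e2 : xhat - x = - b by rewrite /b opprB.
have key : `|b| ^+ 2 <= ip a b.
  move: hH; rewrite /H /= e1 e2 (ipNr hip) (ipB hip) (ipnorm hip) => h.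
  lra.
have csab := cs hip a b.
split.
  have [b0|bp] := eqVneq `|b| 0; first by rewrite /b in b0; rewrite b0 ltW.
  have bp' : 0 < `|b| by rewrite lt_def bp normr_ge0.
  rewrite -/b -/a -(ler_pM2r bp') -expr2.
  exact: le_trans key csab.
rewrite /dist_to_set; apply: lb_le_inf.
  exists `|x - xhat|, xhat => //; by rewrite /Hhat /= subrr (ip0r hip).
move=> r [t Ht <-].
rewrite ler_pdivrMr //.
have e3 : x - t = b - (t - xhat) by rewrite /b opprB addrA subrK.
have h := cs hip a (x - t).
rewrite e3 (ipBr hip) -e3 in h.
move: Ht; rewrite /Hhat /= -/a => Ht.
rewrite mulrC.
apply: le_trans key _; apply: le_trans h.
by rewrite lerDl oppr_ge0.
Qed.
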